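(* Let $n\ge1$, $m\ge1$, $1\le j\le n$, and let $\Delta$ be the Newton polytope of $K^j_{n,m}=x_1^m+\dots+x_n^m+(x_1\cdots x_j)^{-1}$. For $0\le k\le nm$, $$W_\Delta(k)=\binom{n-1+k}{n-1}+\sum_{s=1}^j\beta(j,s)\sum_{\ell=1}^n\binom{k-\ell m+(n-j-1)}{n-s-1}+\alpha(j,k),$$ where $\beta(j,s)=\binom js$ except that $\beta(n,n)=0$; $\alpha(j,k)=0$ unless $j=n$ and $k$ is a positive multiple of $m$, in which case $\alpha(j,k)=1$; and binomial coefficients follow the convention $\binom ab=0$ whenever $a<b$ (in particular whenever $a<0$).
   Context: The Newton polytope $\Delta$ is the convex hull of $\vec0$, $-(e_1+\dots+e_j)$, and $me_1,\dots,me_n$; its denominator is $D(\Delta)=m$. The weight $w(u)$ of $u\in\mathbb{Q}^n$ is the least $c\in\mathbb Q_{\ge0}$ with $u\in c\Delta$ ($\infty$ if none), and $W_\Delta(k)=\#\{u\in\mathbb Z^n:w(u)=k/m\}$. *)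

(* Defs.v *)
From HB Require Import structures.
From mathcomp Require Import all_boot all_order all_algebra.
Unset Printing Implicit Defensive.
Import Order.TTheory GRing.Theory Num.Theory.
Local Open Scope ring_scope.

(* Delta = conv(0, -(e_1+..+e_j), m e_1, ..., m e_n) in Q^n (coordinates are
   indexed by 'I_n, so e_1..e_j are the indices i with i < j).
   u \in c * Delta  iff  u = c * (a0 * 0 + am * (-(e_1+..+e_j)) + sum_i a_i * m e_i)
   for some convex coefficients a0, am, a_i. *)
Definition in_scaled_Delta (n m j : nat) (c : rat) (u : 'I_n -> rat) : Prop :=
  exists (a0 am : rat) (a : 'I_n -> rat),
    [/\ 0 <= a0, 0 <= am, (forall i, 0 <= a i),
        a0 + am + \sum_(i < n) a i = 1 &
        forall i : 'I_n,
          u i = c * (a0 * 0 + am * (if (i < j)%N then -1 else 0) + a i * m%:R)].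

Definition weight_is (n m j : nat) (u : 'I_n -> int) (c : rat) : Prop :=
  [/\ 0 <= c,
      in_scaled_Delta n m j c (fun i => (u i)%:~R) &
      forall c' : rat, 0 <= c' ->
        in_scaled_Delta n m j c' (fun i => (u i)%:~R) -> c <= c'].

Definition W_Delta_is (n m j k : nat) (N : int) : Prop :=
  exists s : seq {ffun 'I_n -> int},
    [/\ uniq s,
        (forall u : {ffun 'I_n -> int},
            u \in s <-> weight_is n m j u (k%:R / m%:R)) &
        (size s)%:Z = N].

Definition binomZ (a b : int) : int :=
  if (b < 0) || (a < b) then 0 else ('C(`|a|%N, `|b|%N))%:Z.

Definition beta (n j s : nat) : int :=
  if (j == n) && (s == n) then 0 else ('C(j, s))%:Z.

Definition alpha (n m j k : nat) : int :=
  if [&& j == n, (0 < k)%N & (m %| k)%N] then 1 else 0.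

(* Main.v *)
Require Import Defs.
From HB Require Import structures.
From mathcomp Require Import all_boot all_order all_algebra.
From mathcomp Require Import zify ring lra.
Import Order.TTheory GRing.Theory Num.Theory.

Set Implicit Arguments. Unset Strict Implicit.

Fixpoint comps (n N : nat) : seq (seq nat) :=
  match n with
  | 0 => if N == 0 then [:: [::]] else [::]
  | n'.+1 => [seq a :: w | a <- iota 0 N.+1, w <- comps n' (N - a)]
  end.

Lemma comps_S n N : comps n.+1 N = [seq a :: w | a <- iota 0 N.+1, w <- comps n (N - a)].
Proof. by []. Qed.

Lemma mem_comps n N w : (w \in comps n N) = (size w == n) && (sumn w == N).
Proof.
elim: n N w => [|n IH] N w.
  by case: N => [|N] /=; case: w => [|x w] //=; rewrite ?inE //.
rewrite comps_S.
apply/allpairsPdep/idP => [[a [v [Ha Hv ->]]]|].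
  rewrite IH in Hv; move: Hv => /andP[/eqP Hz /eqP Hs] /=; rewrite mem_iota in Ha.
  rewrite Hz eqxx /=; apply/eqP; lia.
case: w => [|a v] //= /andP[Hs /eqP Hsum]; exists a, v; split => //.
  have -> : 0 :: iota 1 N = iota 0 N.+1 by []. rewrite mem_iota; lia.
rewrite IH; apply/andP; split=> //; apply/eqP; lia.
Qed.

Lemma uniq_comps n N : uniq (comps n N).
Proof.
elim: n N => [|n IH] N; first by rewrite /=; case: (N == 0).
rewrite comps_S.
apply: allpairs_uniq_dep => //; first exact: iota_uniq.
by move=> [a v] [b w] _ _ /= [-> ->].
Qed.

Lemma sumn_rev_iota (F : nat -> nat) N :
  sumn [seq F (N - x) | x <- iota 0 N.+1] = \sum_(0 <= y < N.+1) F y.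
Proof.
rewrite sumnE big_map -/(index_iota 0 N.+1) big_nat_rev.
by apply: eq_big_nat => i /andP[_ Hi]; congr F; lia.
Qed.

Lemma hockey n N : \sum_(0 <= y < N.+1) 'C(y + n, n) = 'C(N + n.+1, n.+1).
Proof.
elim: N => [|N IH]; first by rewrite big_nat1 !add0n !binn.
by rewrite big_nat_recr //= IH [in RHS]addSn binS addSnnS.
Qed.

Lemma size_comps n N : size (comps n.+1 N) = 'C(N + n, n).
Proof.
elim: n N => [|n IH] N; rewrite comps_S size_allpairs_dep.
  rewrite (sumn_rev_iota (fun y => size (comps 0 y))) big_nat_recl //= big1 ?bin0 //.
rewrite (sumn_rev_iota (fun y => size (comps n.+1 y))).
rewrite (eq_big_nat _ _ (F2 := fun y => 'C(y + n, n))); last by move=> i _; rewrite IH.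
by rewrite hockey addnS.
Qed.

Definition allpos (j : nat) (w : seq nat) : bool := all (fun x => 0 < x) (take j w).

Fixpoint shiftj (j : nat) (v : seq nat) : seq nat :=
  match j, v with
  | j'.+1, x :: v' => x.+1 :: shiftj j' v'
  | _, _ => v
  end.

Fixpoint unshiftj (j : nat) (v : seq nat) : seq nat :=
  match j, v with
  | j'.+1, x :: v' => x.-1 :: unshiftj j' v'
  | _, _ => v
  end.

Lemma size_shiftj j v : size (shiftj j v) = size v.
Proof. by elim: j v => [|j IH] [|x v] //=; rewrite IH. Qed.

Lemma size_unshiftj j v : size (unshiftj j v) = size v.
Proof. by elim: j v => [|j IH] [|x v] //=; rewrite IH. Qed.

Lemma sumn_shiftj j v : j <= size v -> sumn (shiftj j v) = sumn v + j.
Proof.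
elim: j v => [|j IH] [|x v] //=; first by rewrite addn0.
move=> H; rewrite IH //; lia.
Qed.

Lemma sumn_unshiftj j v : j <= size v -> allpos j v -> sumn (unshiftj j v) = sumn v - j.
Proof.
rewrite /allpos.
elim: j v => [|j IH] [|x v] //=; first by rewrite subn0.
move=> H /andP[Hx Ha]; rewrite IH //.
have : j <= sumn v.
  clear IH Hx; elim: j v H Ha => [|j' IH'] [|y v'] //= H1 /andP[Hy Hb].
  have := IH' v' H1 Hb; lia.
lia.
Qed.

Lemma allpos_sumn j v : j <= size v -> allpos j v -> j <= sumn v.
Proof.
rewrite /allpos.
elim: j v => [|j IH] [|x v] //= H /andP[Hy Hb].
have := IH v H Hb; lia.
Qed.

Lemma allpos_shiftj j v : allpos j (shiftj j v).
Proof. by rewrite /allpos; elim: j v => [|j IH] [|x v] //=. Qed.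

Lemma unshiftjK j : cancel (shiftj j) (unshiftj j).
Proof. by elim: j => [|j IH] [|x v] //=; rewrite IH. Qed.

Lemma shiftjK j v : allpos j v -> shiftj j (unshiftj j v) = v.
Proof.
rewrite /allpos.
elim: j v => [|j IH] [|x v] //= /andP[Hx Ha]; rewrite IH //; congr (_ :: _); lia.
Qed.

Lemma count_allpos n N j : j <= n ->
  count (allpos j) (comps n N) = if j <= N then size (comps n (N - j)) else 0.
Proof.
move=> jn; case: ifP => jN.
  rewrite -size_filter.
  have -> : size (comps n (N - j)) = size (map (shiftj j) (comps n (N - j))) by rewrite size_map.
  apply: perm_size; apply: uniq_perm.
  - exact/filter_uniq/uniq_comps.
  - rewrite map_inj_uniq ?uniq_comps //; exact: can_inj (@unshiftjK j).
  move=> w; rewrite mem_filter mem_comps; apply/idP/mapP.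
    move=> /and3P[Ha /eqP Hs /eqP Hsum]; exists (unshiftj j w); last by rewrite shiftjK.
    by rewrite mem_comps size_unshiftj Hs eqxx sumn_unshiftj ?Hs ?Hsum ?eqxx.
  move=> [v]; rewrite mem_comps => /andP[/eqP Hs /eqP Hsum] ->.
  rewrite allpos_shiftj size_shiftj Hs eqxx sumn_shiftj ?Hs // Hsum /=; apply/eqP; lia.
apply/eqP; rewrite -leqn0 leqNgt -has_count; apply/hasP => [[w]].
rewrite mem_comps => /andP[/eqP Hs /eqP Hsum] Ha.
have := allpos_sumn (v:=w) (j:=j); rewrite Hs Hsum => /(_ jn Ha); lia.
Qed.

Unset Implicit Arguments. Set Strict Implicit.

Local Open Scope ring_scope.

Definition negp (x : int) : nat := if x < 0 then `|x|%N else 0%N.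

Definition tU (n j : nat) (u : 'I_n -> int) : nat :=
  (\max_(i < n | (i < j)%N) negp (u i))%N.
Arguments tU {n}.

Definition Qr (n m j : nat) (u : 'I_n -> int) : rat :=
  \sum_(i < n) (u i)%:~R + (tU j u)%:R * (m%:R + j%:R).

Definition tailP (n j : nat) (u : 'I_n -> int) := forall i : 'I_n, (j <= i)%N -> 0 <= u i.
Arguments Qr {n}. Arguments tailP {n}.

Definition ind (j i : nat) : rat := if (i < j)%N then 1 else 0.

Lemma sum_ind n j : (j <= n)%N -> \sum_(i < n) ind j i = j%:R.
Proof.
move=> jn; rewrite -(big_mkord xpredT (ind j)) (big_cat_nat _ jn) //=.
rewrite [X in _ + X]big1_seq ?addr0; last first.
  by move=> i /andP[_]; rewrite mem_index_iota /ind => /andP[H _]; rewrite ltnNge H.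
rewrite (eq_big_seq (fun _ => 1)); last first.
  by move=> i; rewrite mem_index_iota /ind => /andP[_ ->].
by rewrite big_const_nat subn0; elim: j {jn} => //= j ->; rewrite -natr1 addrC.
Qed.

Lemma negp_ge (x : int) : - x%:~R <= (negp x)%:R :> rat.
Proof.
rewrite /negp; case: ltrP => Hx.
  have -> : (`|x|%N)%:R = (`|x|%:~R : rat) by rewrite -[in RHS]abszE.
  by rewrite ltr0_norm // intrN.
by rewrite oppr_le0 ler0z.
Qed.

Lemma tU_ge n j (u : 'I_n -> int) (i : 'I_n) : (i < j)%N -> - (u i)%:~R <= (tU j u)%:R :> rat.
Proof.
move=> Hi; apply: (le_trans (negp_ge (u i))); rewrite ler_nat.
exact: (leq_bigmax_cond _ Hi).
Qed.

Lemma tU_le n j (u : 'I_n -> int) (A : rat) : 0 <= A ->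
  (forall i : 'I_n, (i < j)%N -> - (u i)%:~R <= A) -> (tU j u)%:R <= A.
Proof.
move=> A0 HA; rewrite /tU; apply: (big_ind (fun x : nat => x%:R <= A)) => //.
  by move=> x y Hx Hy; rewrite /maxn; case: ifP.
move=> i Hi; rewrite /negp; case: ltrP => Hx //.
have -> : (`|u i|%N)%:R = (`|u i|%:~R : rat) by rewrite -[in RHS]abszE.
by rewrite ltr0_norm // intrN; apply: HA.
Qed.

Lemma A1 n m j c (u : 'I_n -> int) : (j <= n)%N -> 0 <= c ->
  in_scaled_Delta n m j c (fun i => (u i)%:~R) -> tailP j u /\ Qr m j u <= c * m%:R.
Proof.
move=> jn c0 [a0 [am [a [H0 Ham Ha Hs Hu]]]].
have Hu' : forall i, (u i)%:~R = - (c * am) * ind j i + c * m%:R * a i.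
  by move=> i; rewrite Hu /ind; case: ifP => _; ring.
split.
  move=> i Hi; rewrite -(ler0z rat) Hu' /ind ltnNge Hi /= mulr0 add0r.
  by rewrite !mulr_ge0.
have Ht : (tU j u)%:R <= c * am.
  apply: tU_le; first exact: mulr_ge0.
  move=> i Hi; rewrite Hu' /ind Hi mulr1 opprD opprK.
  have : 0 <= c * m%:R * a i by rewrite !mulr_ge0.
  lra.
rewrite /Qr (eq_bigr _ (fun i _ => Hu' i)) big_split /= -!mulr_sumr sum_ind //.
have Hsa : \sum_(i < n) a i = 1 - a0 - am by lra.
rewrite Hsa.
have h1 : (tU j u)%:R * (m%:R + j%:R) <= c * am * (m%:R + j%:R).
  by rewrite ler_wpM2r // addr_ge0.
have h2 : 0 <= c * m%:R * a0 by rewrite !mulr_ge0.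
nra.
Qed.

Lemma A2 n m j c (u : 'I_n -> int) : (1 <= m)%N -> (j <= n)%N -> tailP j u -> 0 <= c ->
  Qr m j u <= c * m%:R -> in_scaled_Delta n m j c (fun i => (u i)%:~R).
Proof.
move=> m1 jn Htail c0 HQ.
set t : rat := (tU j u)%:R.
pose v i := (u i)%:~R + ind j i * t.
have Hv : forall i, 0 <= v i.
  move=> i; rewrite /v /ind; case: ifP => Hi.
    by have := @tU_ge n j u i Hi; rewrite -/t mul1r; lra.
  by rewrite mul0r addr0 ler0z; apply: Htail; rewrite leqNgt Hi.
have t0 : 0 <= t by rewrite /t ler0n.
have m0 : 0 < m%:R :> rat by rewrite ltr0n.
have HQ' : Qr m j u = \sum_(i < n) v i + t * m%:R.
  by rewrite /Qr /v big_split /= -mulr_suml sum_ind // -/t; ring.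
have S0 : 0 <= \sum_(i < n) v i by apply: sumr_ge0 => i _; exact: Hv.
case: (eqVneq c 0) => [Hc|Hc].
  move: HQ; rewrite HQ' Hc mul0r => HQ.
  have Ht : t = 0 by nra.
  have HS : \sum_(i < n) v i = 0 by nra.
  exists 1, 0, (fun=> 0); split => //=; first by rewrite big1 // !addr0.
  move=> i; rewrite mul0r.
  have := psumr_eq0P (P := xpredT) (fun i _ => Hv i) HS (i := i) isT.
  by rewrite /v Ht mulr0 addr0 => ->.
have cp : 0 < c by rewrite lt_def Hc c0.
exists (1 - t / c - \sum_(i < n) (v i / (c * m%:R))), (t / c), (fun i => v i / (c * m%:R)).
split.
- rewrite -mulr_suml.
  have -> : t / c = (t * m%:R) / (c * m%:R).
    by field; apply/andP; split; rewrite ?Hc // lt0r_neq0.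
  have key : (t * m%:R + \sum_(i < n) v i) / (c * m%:R) <= 1.
    rewrite ler_pdivrMr ?mulr_gt0 // mul1r.
    by move: HQ; rewrite HQ'; lra.
  rewrite mulrDl in key; lra.
- exact: divr_ge0.
- by move=> i; apply: divr_ge0 (Hv i) _; rewrite mulr_ge0 // ltW.
- ring.
- by move=> i; rewrite /v /ind; case: ifP => _; field; rewrite Hc (lt0r_neq0 m0).
Qed.

Lemma Qr_ge0 n m j (u : 'I_n -> int) : (j <= n)%N -> tailP j u -> 0 <= Qr m j u.
Proof.
move=> jn Htail.
set t : rat := (tU j u)%:R.
pose v i := (u i)%:~R + ind j i * t.
have Hv : forall i, 0 <= v i.
  move=> i; rewrite /v /ind; case: ifP => Hi.
    by have := @tU_ge n j u i Hi; rewrite -/t mul1r; lra.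
  by rewrite mul0r addr0 ler0z; apply: Htail; rewrite leqNgt Hi.
have t0 : 0 <= t by rewrite /t ler0n.
have HQ' : Qr m j u = \sum_(i < n) v i + t * m%:R.
  by rewrite /Qr /v big_split /= -mulr_suml sum_ind // -/t; ring.
have S0 : 0 <= \sum_(i < n) v i by apply: sumr_ge0 => i _; exact: Hv.
by rewrite HQ' addr_ge0 // mulr_ge0.
Qed.

Lemma A3 n m j k (u : 'I_n -> int) : (1 <= m)%N -> (j <= n)%N ->
  weight_is n m j u (k%:R / m%:R) <-> tailP j u /\ Qr m j u = k%:R.
Proof.
move=> m1 jn.
have m0 : 0 < m%:R :> rat by rewrite ltr0n.
have cm : k%:R / m%:R * m%:R = k%:R :> rat by field; rewrite lt0r_neq0.
split.
  move=> [c0 Hin Hmin].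
  have [Ht HQ] := @A1 n m j _ u jn c0 Hin.
  rewrite cm in HQ; split => //.
  have Q0 := @Qr_ge0 n m j u jn Ht.
  have := Hmin (Qr m j u / m%:R) (divr_ge0 Q0 (ltW m0)).
  have HQQ : Qr m j u <= Qr m j u / m%:R * m%:R by rewrite divfK ?lt0r_neq0.
  move=> /(_ (@A2 n m j _ u m1 jn Ht (divr_ge0 Q0 (ltW m0)) HQQ)).
  rewrite ler_pM2r ?invr_gt0 //; lra.
move=> [Ht HQ].
have c0 : 0 <= k%:R / m%:R :> rat by rewrite divr_ge0 // ltW.
split => //.
  by apply: A2 => //; rewrite cm HQ.
move=> c' c'0 Hin; have [_ HQ'] := @A1 n m j _ u jn c'0 Hin.
by rewrite ler_pdivrMr // -HQ.
Qed.

Lemma negp_sub (a b : nat) : negp (a%:Z - b%:Z) = (b - a)%N.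
Proof.
rewrite /negp; case: ltrP => H.
  have -> : (a%:Z - b%:Z) = - (b - a)%N%:Z by rewrite -subzn; [ring| lia].
  by rewrite abszN absz_nat.
by apply/esym/eqP; rewrite subn_eq0; lia.
Qed.

Definition toU (n j : nat) (p : nat * seq nat) : {ffun 'I_n -> int} :=
  [ffun i : 'I_n => (nth 0%N p.2 i)%:Z - (if (i < j)%N then p.1 else 0%N)%:Z].

Lemma sumn_nth (w : seq nat) : sumn w = (\sum_(i < size w) nth 0%N w i)%N.
Proof. by rewrite sumnE (big_nth 0%N) big_mkord. Qed.

Lemma tU_toU n j t w : size w = n -> (j <= n)%N ->
  (t == 0%N) || ~~ allpos j w -> tU j (toU n j (t, w)) = t.
Proof.
move=> Hs jn Hg; apply/eqP; rewrite eqn_leq; apply/andP; split.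
  rewrite /tU; apply/bigmax_leqP => i Hi; rewrite ffunE /= Hi negp_sub; lia.
case/orP: Hg => [/eqP -> //|].
rewrite /allpos; move/allPn => [x Hx]; rewrite lt0n negbK => /eqP Hx0.
have : (index x (take j w) < size (take j w))%N by rewrite index_mem.
rewrite size_take; set i0 := index x (take j w) => Hi0.
rewrite Hs in Hi0.
have Hi0n : (i0 < n)%N by move: Hi0; case: (ltnP j n) => H1 H2; lia.
have Hi0j : (i0 < j)%N by move: Hi0; case: (ltnP j n) => H1 H2; lia.
have Hnth : nth 0%N w i0 = 0%N.
  by rewrite -(nth_take 0%N Hi0j) nth_index // Hx0.
apply: leq_trans (leq_bigmax_cond (F := fun i : 'I_n => negp (toU n j (t, w) i)) (Ordinal Hi0n) Hi0j).
by rewrite ffunE /= Hnth Hi0j negp_sub subn0.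
Qed.

Definition good (j t : nat) (w : seq nat) : bool := (t == 0%N) || ~~ allpos j w.
Definition G (n m j k t : nat) := filter (good j t) (comps n (k - t * m)).
Definition L (n m j k : nat) :=
  [seq (t, w) | t <- iota 0 (k %/ m).+1, w <- G n m j k t].

Lemma memL n m j k p : p \in L n m j k =
  [&& (p.1 <= k %/ m)%N, p.2 \in comps n (k - p.1 * m) & good j p.1 p.2].
Proof.
case: p => t w /=; apply/allpairsPdep/idP.
  move=> [a [v [Ha Hv [-> ->]]]]; move: Ha Hv; rewrite mem_iota mem_filter.
  by move=> Ha /andP[-> ->]; rewrite andbT; lia.
move=> /and3P[H1 H2 H3]; exists t, w; split => //.
  by rewrite mem_iota; lia.
by rewrite mem_filter H3.
Qed.

Lemma uniqL n m j k : uniq (L n m j k).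
Proof.
apply: allpairs_uniq_dep; first exact: iota_uniq.
  by move=> t _; apply/filter_uniq/uniq_comps.
by move=> [a v] [b x] _ _ /= [-> ->].
Qed.

Lemma sizeL n m j k : size (L n m j k) =
  (\sum_(0 <= t < (k %/ m).+1) count (good j t) (comps n (k - t * m)))%N.
Proof.
rewrite size_allpairs_dep sumnE big_map; apply: eq_bigr => t _.
by rewrite /G size_filter.
Qed.

Lemma toU_ok n m j k p : (1 <= m)%N -> (j <= n)%N -> p \in L n m j k ->
  tailP j (toU n j p) /\ Qr m j (toU n j p) = k%:R.
Proof.
case: p => t w m1 jn; rewrite memL /= mem_comps => /and3P[Ht /andP[/eqP Hs /eqP Hsum] Hg].
split.
  by move=> i Hi; rewrite ffunE /= ltnNge Hi /= subr0.
rewrite /Qr tU_toU //.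
have -> : \sum_(i < n) ((toU n j (t, w) i)%:~R : rat)
   = \sum_(i < n) ((nth 0%N w i)%:R - ind j i * t%:R).
  apply: eq_bigr => i _; rewrite ffunE /= intrB /ind; case: ifP => _.
    by rewrite mul1r.
  by rewrite mul0r.
rewrite sumrB -mulr_suml sum_ind // -natr_sum.
have -> : (\sum_(i < n) nth 0%N w i)%N = sumn w by rewrite sumn_nth Hs.
rewrite Hsum.
have tm : (t * m <= k)%N by rewrite -leq_divRL.
rewrite natrB // natrM; ring.
Qed.

Lemma toU_inj n m j k : (j <= n)%N -> {in L n m j k &, injective (toU n j)}.
Proof.
move=> jn [t w] [t' w']; rewrite !memL /= !mem_comps.
move=> /and3P[_ /andP[/eqP Hs _] Hg] /and3P[_ /andP[/eqP Hs' _] Hg'] E.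
have Et : t = t' by rewrite -(@tU_toU n j t w Hs jn Hg) -(@tU_toU n j t' w' Hs' jn Hg') E.
subst t'; congr (_, _); apply: (@eq_from_nth _ 0%N); first by rewrite Hs Hs'.
move=> i; rewrite Hs => Hi.
have := congr1 (fun f : {ffun 'I_n -> int} => f (Ordinal Hi)) E.
rewrite !ffunE /= => /eqP; rewrite (can_eq (subrK _)) => /eqP [].
done.
Qed.

Lemma toU_onto n m j k (u : {ffun 'I_n -> int}) : (1 <= m)%N -> (j <= n)%N ->
  tailP j u -> Qr m j u = k%:R -> exists2 p, p \in L n m j k & toU n j p = u.
Proof.
move=> m1 jn Htail HQ.
set t := tU j u.
pose x (i : 'I_n) : int := u i + (if (i < j)%N then t else 0%N)%:Z.
have Hx : forall i, 0 <= x i.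
  move=> i; rewrite /x; case: ifP => Hi.
    have := @tU_ge n j u i Hi; rewrite -/t.
    have -> : - ((u i)%:~R : rat) = (- u i)%:~R by rewrite intrN.
    have -> : (t%:R : rat) = (t%:Z)%:~R by [].
    by rewrite ler_int; lia.
  by rewrite addr0; apply: Htail; rewrite leqNgt Hi.
pose w := [seq `|x i|%N | i <- enum 'I_n].
have Hsw : size w = n by rewrite size_map size_enum_ord.
have Hnth : forall i : 'I_n, nth 0%N w i = `|x i|%N.
  by move=> i; rewrite (nth_map i) ?size_enum_ord // nth_ord_enum.
have Hsum : (sumn w)%:R = \sum_(i < n) ((u i)%:~R : rat) + (j * t)%:R.
  rewrite sumnE big_map big_enum /= natr_sum.
  rewrite (eq_bigr (fun i => (u i)%:~R + ind j i * t%:R)); last first.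
    move=> i _; have -> : ((`|x i|%N)%:R : rat) = (x i)%:~R.
      by rewrite -[in RHS](gez0_abs (Hx i)).
    by rewrite /x intrD /ind; case: ifP => _; rewrite ?mul1r ?mul0r.
  by rewrite big_split /= -mulr_suml sum_ind // natrM.
have Hk : (sumn w + t * m)%N = k.
  apply/eqP; rewrite -(eqr_nat rat) (natrD rat) Hsum -HQ /Qr -/t !(natrM rat); apply/eqP; ring.
exists (t, w); last first.
  apply/ffunP => i; rewrite ffunE /= Hnth gez0_abs // /x; ring.
rewrite memL /= mem_comps Hsw eqxx /=; apply/and3P; split.
- by rewrite leq_divRL //; lia.
- apply/eqP; lia.
rewrite /good; case: (eqVneq t 0%N) => //= Ht0.
have : [exists i0 : 'I_n, (i0 < j)%N && (negp (u i0) == t)].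
  apply: contraT => /existsPn H.
  have : (t <= t.-1)%N.
    rewrite {1}/t /tU; apply/bigmax_leqP => i Hi.
    have := H i; rewrite Hi /= => Hne.
    have := @leq_bigmax_cond _ (fun i : 'I_n => (i < j)%N) (fun i => negp (u i)) i Hi.
    rewrite -/(tU j u) -/t; move: Hne; case: (negp (u i) =P t) => //; lia.
  lia.
move=> /existsP[i0 /andP[Hi0 /eqP Hn0]].
have Hx0 : x i0 = 0.
  move: Hn0; rewrite /x Hi0 /negp; case: ltrP => Hu Ht; last by move: Ht0; rewrite -Ht.
  rewrite -Ht; lia.
apply/negP => /allP Hall.
have Hi0s : (i0 < size (take j w))%N by rewrite size_take Hsw; case: (ltnP j n); lia.
have := Hall _ (mem_nth 0%N Hi0s); rewrite nth_take // Hnth Hx0.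
done.
Qed.

Lemma core n' j N : (1 <= j <= n'.+1)%N -> ~~ ((j == n'.+1) && (N == 0%N)) ->
  (\sum_(1 <= s < j.+1) (if (s < n'.+1)%N then 'C(j, s) * 'C(N + n' - j, n' - s) else 0)
   + (if (j <= N)%N then 'C(N - j + n', n') else 0))%N = 'C(N + n', n').
Proof.
move=> /andP[j1 jn] Hne.
set g := fun s => (if (s < n'.+1)%N then 'C(j, s) * 'C(N + n' - j, n' - s) else 0)%N.
have E1 : (\sum_(1 <= s < j.+1) g s = \sum_(1 <= s < n'.+2) g s)%N.
  rewrite [RHS](big_cat_nat _ (n := j.+1)) //=; try lia.
  rewrite [X in (_ = _ + X)%N]big1_seq ?addn0 // => s /andP[_].
  rewrite mem_index_iota => /andP[H1 H2]; rewrite /g; case: ifP => // _.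
  by rewrite bin_small ?mul0n.
have E1b : (\sum_(1 <= s < n'.+2) g s = \sum_(1 <= s < n'.+1) g s)%N.
  by rewrite big_nat_recr //= /g ltnn addn0.
have E2 : (\sum_(1 <= s < n'.+1) g s = \sum_(1 <= s < n'.+1) 'C(j, s) * 'C(N + n' - j, n' - s))%N.
  by apply: eq_big_nat => s /andP[_ Hs]; rewrite /g Hs.
have V := binomial.Vandermonde j (N + n' - j)%N n'.
rewrite -(big_mkord xpredT (fun s => 'C(j, s) * 'C(N + n' - j, n' - s))%N) in V.
rewrite big_ltn // bin0 mul1n subn0 -E2 -E1b -E1 in V.
have Hjx : (j + (N + n' - j) = N + n')%N by move: Hne; case: (ltnP j n'.+1); case: (N =P 0%N); lia.
rewrite Hjx in V; rewrite -V addnC; congr (_ + _)%N.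
case: ifP => H.
  by congr 'C(_, _); lia.
by rewrite bin_small //; lia.
Qed.

Lemma sumPosz (r : seq nat) (F : nat -> nat) :
  Posz (\sum_(i <- r) F i)%N = \sum_(i <- r) (F i)%:Z.
Proof. by elim: r => [|x r IH]; rewrite ?big_nil ?big_cons // PoszD IH. Qed.

Lemma binomZ_neg1 b : binomZ (-1) b = 0.
Proof.
rewrite /binomZ; case: ifP => // /negbT; rewrite negb_or -!leNgt => /andP[H1 H2].
by have := le_trans H1 H2.
Qed.

Lemma perl n j N : (1 <= n)%N -> (1 <= j <= n)%N ->
  \sum_(1 <= s < j.+1) beta n j s * binomZ (N%:Z + (n%:Z - j%:Z - 1)) (n%:Z - s%:Z - 1)
  + (if (j == n) && (N == 0%N) then 1 else 0)
  = ('C(N + n.-1, n.-1))%:Z - (if (j <= N)%N then 'C(N - j + n.-1, n.-1) else 0%N)%:Z.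
Proof.
case: n => [//|n'] _ /andP[j1 jn] /=.
case: ifP => Hc.
  move/andP: Hc => [/eqP Hj /eqP HN]; subst j N.
  rewrite big1_seq; last first.
    move=> s _; have -> : 0%:Z + (n'.+1%:Z - n'.+1%:Z - 1) = -1 by ring.
    by rewrite binomZ_neg1 mulr0.
  by rewrite add0n binn /= add0r subr0.
have Hc' : ~~ ((j == n'.+1) && (N == 0%N)) by rewrite Hc.
have := @core n' j N; rewrite j1 jn => /(_ isT Hc') {}Hcore.
rewrite -Hcore PoszD addr0 addrK sumPosz.
apply: eq_big_seq => s; rewrite mem_index_iota => /andP[s1 sj].
have -> : N%:Z + (n'.+1%:Z - j%:Z - 1) = (N + n' - j)%N%:Z.
  rewrite -subzn; last by move: Hc'; case: (ltnP j n'.+1); case: (N =P 0%N); lia.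
  rewrite PoszD; ring.
case: (ltnP s n'.+1) => Hs; last first.
  have Hsn : s = n'.+1 by lia.
  have Hjn : j = n'.+1 by lia.
  by rewrite /beta Hsn Hjn !eqxx /= mul0r.
have -> : n'.+1%:Z - s%:Z - 1 = (n' - s)%N%:Z.
  rewrite -subzn; last by lia.
  rewrite -addn1 PoszD; ring.
have -> : beta n'.+1 j s = 'C(j, s)%:Z.
  rewrite /beta (_ : (s == n'.+1) = false) ?andbF //; lia.
rewrite /binomZ /= ltz_nat; case: ltnP => H.
  by rewrite (bin_small H) muln0 mulr0.
by rewrite PoszM.
Qed.

Lemma cnt0 n' j k : count (good j 0) (comps n'.+1 k) = 'C(k + n', n').
Proof. by rewrite (eq_count (a2 := predT)) // count_predT size_comps. Qed.

Lemma cntS n' j t N : (j <= n'.+1)%N -> (0 < t)%N ->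
  (count (good j t) (comps n'.+1 N))%:Z =
  ('C(N + n', n'))%:Z - (if (j <= N)%N then 'C(N - j + n', n') else 0%N)%:Z.
Proof.
move=> jn t0.
have := count_predC (allpos j) (comps n'.+1 N).
rewrite count_allpos // !size_comps => H.
rewrite -H PoszD addrC addKr; congr Posz; apply: eq_count => w.
by rewrite /good /= (_ : (t == 0%N) = false) //; lia.
Qed.

Lemma alphaE n m j k : (1 <= m)%N ->
  alpha n m j k = \sum_(1 <= l < (k %/ m).+1)
     (if (j == n) && ((k - l * m)%N == 0%N) then 1 else 0).
Proof.
move=> m1; rewrite /alpha.
case: (j =P n) => [Hj|Hj] /=; last by rewrite big1.
subst j.
have Hd := divn_eq k m.
case: (posnP (k %/ m)) => HK.
  rewrite HK big_geq //.
  case: ifP => // /andP[Hk Hdv].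
  by move: Hdv; rewrite dvdn_eq HK mul0n => /eqP Hk0; move: Hk; rewrite -Hk0.
rewrite big_nat_recr //= big1_seq; last first.
  move=> l /andP[_]; rewrite mem_index_iota => /andP[H1 H2].
  case: (eqVneq (k - l * m)%N 0%N) => // E; exfalso.
  have : (l.+1 * m <= k %/ m * m)%N by rewrite leq_mul2r H2 orbT.
  rewrite mulSn.
  lia.
rewrite add0r dvdn_eq.
have -> : (0 < k)%N = true.
  have H1 : (m <= k %/ m * m)%N by rewrite leq_pmull.
  apply/idP; lia.
have -> : ((k - k %/ m * m)%N == 0%N) = (k %/ m * m == k)%N.
  apply/idP/idP => /eqP E; apply/eqP; lia.
by [].
Qed.

Theorem proposition4p6 (n m j k : nat) :
  (1 <= n)%N -> (1 <= m)%N -> (1 <= j <= n)%N -> (k <= n * m)%N ->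
  W_Delta_is n m j k
    (binomZ (n%:Z - 1 + k%:Z) (n%:Z - 1)
     + \sum_(1 <= s < j.+1)
         beta n j s *
         \sum_(1 <= l < n.+1)
           binomZ (k%:Z - (l * m)%:Z + (n%:Z - j%:Z - 1)) (n%:Z - s%:Z - 1)
     + alpha n m j k).
Proof.
move=> n1 m1 /andP[j1 jn] hk.
exists (map (toU n j) (L n m j k)); split.
- by rewrite map_inj_in_uniq ?uniqL //; exact: toU_inj.
- move=> u; rewrite A3 //; split.
    by move=> /mapP[p Hp ->]; exact: toU_ok.
  move=> [Ht HQ]; have [p Hp <-] := @toU_onto n m j k u m1 jn Ht HQ; exact: map_f.
rewrite size_map sizeL sumPosz big_ltn // mul0n subn0.
have HK : (k %/ m <= n)%N by rewrite -[X in (_ <= X)%N](mulnK n m1) leq_div2r.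
move: n1 jn hk HK; case: n => [//|n'] _ jn hk HK.
rewrite cnt0.
have E0 : binomZ (Posz n'.+1 - 1 + k%:Z) (Posz n'.+1 - 1) = ('C(k + n', n'))%:Z.
  have -> : Posz n'.+1 - 1 = Posz n' by rewrite -addn1 PoszD addrK.
  rewrite /binomZ /= -PoszD ltz_nat (_ : (n' + k < n')%N = false); last by lia.
  by rewrite addnC.
rewrite E0 -addrA; congr (_ + _).
rewrite (@alphaE n'.+1 m j k m1).
rewrite [in RHS](eq_bigr (fun s => \sum_(1 <= l < n'.+2) beta n'.+1 j s *
   binomZ (k%:Z - (l * m)%:Z + (Posz n'.+1 - j%:Z - 1)) (Posz n'.+1 - s%:Z - 1))); last first.
  by move=> s _; rewrite mulr_sumr.
rewrite [in RHS]exchange_big.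
rewrite [in RHS](big_cat_nat _ (n := (k %/ m).+1)); [|done|exact: HK].
rewrite [X in _ = _ + X + _]big1_seq ?addr0; last first.
  move=> l /andP[_]; rewrite mem_index_iota => /andP[l1 l2].
  have lm : (k < l * m)%N by rewrite -ltn_divLR.
  rewrite big1_seq // => s /andP[_]; rewrite mem_index_iota => /andP[s1 s2].
  rewrite /binomZ; case: ifP => [_|/norP[_ H]]; first by rewrite mulr0.
  exfalso; rewrite -leNgt in H; move: H lm; set L := (l * m)%N; lia.
rewrite -big_split.
apply: eq_big_nat => t /andP[t1 tK].
have tm : (t * m <= k)%N by rewrite -leq_divRL //; lia.
rewrite cntS //.
have P := @perl n'.+1 j (k - t * m)%N isT; rewrite j1 jn /= in P.
rewrite -(P isT) -(subzn tm).
done.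
Qed.
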